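(* Let $\Lambda=(\mathbf a_1\ \cdots\ \mathbf a_m)$ be an $R$-characteristic map over $K$, and let $(\mathbf r^1,1),\dots,(\mathbf r^k,k)$ be reduced marked row vectors in $R^m$ with markings $1,\dots,k$ respectively ($k\ge1$). Then the matrix $\operatorname{proj}_{k_1}M(\Lambda;\mathbf r^1,\dots,\mathbf r^k)$, with its column $k_2$ relabeled $k$, is D-J equivalent (equal up to left multiplication by $GL_{n+k-1}(R)$) to $M\big(\Lambda^{\mathbf r^k};(\mathbf r^1)^{\mathbf r^k},\dots,(\mathbf r^{k-1})^{\mathbf r^k}\big)$.
   Context: $R\in\{\mathbb Z,\mathbb Z_2\}$; $K$ is an $(n-1)$-dimensional star-shaped simplicial sphere on $[m]$; an $R$-characteristic map $\Lambda:[m]\to R^n$ sends the vertices of each $(n-1)$-face to a $\mathbb Z$-basis of $\mathbb Z^n$ ($R=\mathbb Z$) or a basis of $\mathbb Z_2^n$ ($R=\mathbb Z_2$); it is written as the $n\times m$ matrix with columns $\mathbf a_i=\Lambda(i)$. A marked row vector is a pair $(\mathbf r,v)$ with $\mathbf r=(r_1,\dots,r_m)\in R^m$ and $v\in[m]$ (the marking); it is reduced if $r_v=0$. For marked row vectors $(\mathbf r^t,t)$, $t=1,\dots,k$, $M(\Lambda;\mathbf r^1,\dots,\mathbf r^k)$ is the $(n+k)\times(m+k)$ matrix with columns labeled $1_1,1_2,2_1,2_2,\dots,k_1,k_2,k+1,\dots,m$, whose top $n$ rows have $\mathbf a_i$ in columns $i_1$ ($i\le k$) and $i$ ($i>k$)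 and $0$ in columns $i_2$, and whose row $n+t$ has entry $r^t_i-\delta_{it}$ in column $i_1$, $\delta_{it}$ in column $i_2$ ($i\le k$), and $r^t_i$ in column $i$ ($i>k$). For a matrix $M$ and a column $c$ of $M$ which is part of a basis of $R^N$ (primitive), $\operatorname{proj}_cM$ is obtained by choosing $g\in GL_N(R)$ with $g\,M_c$ the last standard basis vector and deleting from $gM$ the last row and column $c$ (defined up to left multiplication by $GL_{N-1}(R)$). For a reduced marked row vector $(\mathbf s,w)$, $\Lambda^{\mathbf s}$ is the $n\times m$ matrix whose $w$-th column is $\mathbf a_w$ and whose $i$-th column is $\mathbf a_i+s_i\mathbf a_w$ for $i\ne w$. For reduced marked row vectors $(\mathbf r,v)$, $(\mathbf s,w)$ with $v\ne w$, $\mathbf r^{\mathbf s}$ is the marked row vector with marking $v$ and entries $(\mathbf r^{\mathbf s})_w=r_w$ and $(\mathbf r^{\mathbf s})_i=r_i+s_ir_w$ for $i\ne w$. *)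

(* Defs.v *)
From HB Require Import structures.
From mathcomp Require Import all_boot all_order all_algebra.
Set Implicit Arguments. Unset Strict Implicit. Unset Printing Implicit Defensive.
Import GRing.Theory.
Local Open Scope ring_scope.

Inductive coeff := CZ | CZ2.
Definition R_of (c : coeff) : comUnitRingType :=
  match c with CZ => int | CZ2 => 'F_2 end.

(* K is given by its facets ((n-1)-faces), subsets of the vertex set [m] = 'I_m;
   vertices are 0-based. K is (n-1)-dimensional: every facet has n vertices. *)
Definition facets_of_dim (m n : nat) (K : {set {set 'I_m}}) : Prop :=
  forall s, s \in K -> #|s| = n.

(* Λ : 'M_(n,m) is an R-characteristic map over K: for every facet σ, the columns
   a_i (i ∈ σ) form a basis of R^n, i.e. listing the n vertices of σ by a
   bijection f : 'I_n -> σ, the n×n matrix (a_{f 0} ... a_{f (n-1)}) is invertible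
   over R (for R = ℤ: a ℤ-basis; for R = ℤ₂: a basis). *)
Definition char_map (R : comUnitRingType) (m n : nat) (K : {set {set 'I_m}})
    (L : 'M[R]_(n, m)) : Prop :=
  forall s, s \in K ->
    exists f : 'I_n -> 'I_m,
      [/\ injective f, (forall j, f j \in s) & colsub f L \in unitmx].

(* M(Λ; r^1,...,r^k), markings 1..k being the 0-based vertices 0..k-1.
   Rows: lshift a (a < n) = top rows, rshift t = row n+t.
   Columns: lshift i (i : 'I_m) = column i_1 if i < k, column i if i >= k;
            rshift t (t : 'I_k) = column t_2. *)
Definition markE (R : comUnitRingType) (k m : nat) : 'M[R]_(k, m) :=
  \matrix_(t < k, i < m) ((t : nat) == (i : nat))%:R.

Definition Mmat (R : comUnitRingType) (n m k : nat)
    (L : 'M[R]_(n, m)) (Rr : 'M[R]_(k, m)) : 'M[R]_(n + k, m + k) :=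
  block_mx L 0 (Rr - markE R k m) 1%:M.

Definition lamS (R : comUnitRingType) (n m : nat)
    (L : 'M[R]_(n, m)) (s : 'rV[R]_m) (w : 'I_m) : 'M[R]_(n, m) :=
  \matrix_(a < n, i < m) (if i == w then L a w else L a i + s 0 i * L a w).

Definition rowS (R : comUnitRingType) (m : nat)
    (r s : 'rV[R]_m) (w : 'I_m) : 'rV[R]_m :=
  \row_(i < m) (if i == w then r 0 i else r 0 i + s 0 i * r 0 w).

Lemma ltn_addnS (n k : nat) : (n + k < n + k.+1)%N.
Proof. by rewrite addnS. Qed.
Lemma leq_addnS (n k : nat) : (n + k <= n + k.+1)%N.
Proof. by rewrite addnS leqnSn. Qed.

Definition last_row (n k : nat) : 'I_(n + k.+1) := Ordinal (ltn_addnS n k).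
Definition init_row (n k : nat) (i : 'I_(n + k)) : 'I_(n + k.+1) :=
  widen_ord (leq_addnS n k) i.

Definition proj_witness (R : comUnitRingType) (n k L : nat)
    (A : 'M[R]_(n + k.+1, L)) (c : 'I_L) (g : 'M[R]_(n + k.+1)) : Prop :=
  g \in unitmx /\ g *m col c A = delta_mx (last_row n k) 0.

(* g*A with its last row deleted (columns still labelled as in A; the column c
   is deleted afterwards by selecting the remaining columns by label). *)
Definition drop_last_row (R : comUnitRingType) (n k L : nat)
    (B : 'M[R]_(n + k.+1, L)) : 'M[R]_(n + k, L) :=
  \matrix_(i < n + k, j < L) B (init_row i) j.

(* Column relabelling: a column label of M' = M(Λ^{r^k}; ...), which has
   markings 0..k'-1 (k = k'+1), is sent to the column of M = M(Λ; r^1..r^k)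
   with the same label, where the column k_2 of M is relabelled as the plain
   column k (0-based vertex vk = k').  Column k_1 of M is never hit. *)
Definition colmap (m k' : nat) (vk : 'I_m) (j : 'I_(m + k')) : 'I_(m + k'.+1) :=
  match split j with
  | inl i => if i == vk then rshift m (@ord_max k') else lshift k'.+1 i
  | inr t => rshift m (widen_ord (leqnSn k') t)
  end.

(* Main.v *)
Require Import Defs.
From HB Require Import structures.
From mathcomp Require Import all_boot all_order all_algebra.
Import GRing.Theory.
Local Open Scope ring_scope.

From mathcomp Require Import ring.
Set Implicit Arguments. Unset Strict Implicit.
Section H.
Variables (R : comUnitRingType) (n k : nat).

Lemma init_last (i : 'I_(n + k)) : (init_row i == last_row n k) = false.
Proof. apply/negbTE; rewrite -val_eqE /= neq_ltn; by rewrite ltn_ord. Qed.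

Lemma init_eq (i j : 'I_(n + k)) : (init_row i == init_row j) = (i == j).
Proof. by rewrite -!val_eqE. Qed.

Lemma sum_split (F : 'I_(n + k.+1) -> R) :
  \sum_j F j = \sum_i F (init_row i) + F (last_row n k).
Proof.
have e : (n + k.+1 = (n + k).+1)%N by rewrite addnS.
rewrite (reindex (cast_ord (esym e))) /=; last first.
  by exists (cast_ord e) => x _; apply/val_inj.
rewrite big_ord_recr /=; congr (_ + F _); last by apply/val_inj.
by apply: eq_bigr => i _; congr F; apply/val_inj.
Qed.

Definition topl (X : 'M[R]_(n + k.+1)) : 'M[R]_(n + k) :=
  \matrix_(i, j) X (init_row i) (init_row j).

Lemma drop_mul L (X : 'M[R]_(n + k.+1)) (Z : 'M[R]_(n + k.+1, L)) :
  (forall i, X (init_row i) (last_row n k) = 0) ->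
  drop_last_row (X *m Z) = topl X *m drop_last_row Z.
Proof.
move=> HX; apply/matrixP => i j; rewrite !mxE sum_split HX mul0r addr0.
by apply: eq_bigr => l _; rewrite !mxE.
Qed.

Lemma topl_mul (X Y : 'M[R]_(n + k.+1)) :
  (forall i, X (init_row i) (last_row n k) = 0) ->
  topl (X *m Y) = topl X *m topl Y.
Proof.
move=> HX; apply/matrixP => i j.
have /matrixP/(_ i (init_row j)) := drop_mul Y HX.
rewrite !mxE => ->; apply: eq_bigr => l _; rewrite !mxE //.
Qed.

Lemma topl1 : topl 1%:M = 1%:M.
Proof. by apply/matrixP => i j; rewrite !mxE init_eq. Qed.

End H.

Lemma split_l m k (a : 'I_m) : split (lshift k a) = inl a.
Proof. exact: (unsplitK (inl a : 'I_m + 'I_k)). Qed.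
Lemma split_r m k (a : 'I_k) : split (rshift m a) = inr a.
Proof. exact: (unsplitK (inr a : 'I_m + 'I_k)). Qed.

Lemma mul_e_entry (R : comUnitRingType) N L (u : 'cV[R]_N) (l : 'I_N)
   (A : 'M[R]_(N, L)) i j :
  ((1%:M + u *m delta_mx 0 l) *m A) i j = A i j + u i 0 * A l j.
Proof.
rewrite mulmxDl mul1mx -mulmxA -rowE mxE; congr (_ + _).
by rewrite mxE big_ord1 mxE.
Qed.

Section ME.
Variables (R : comUnitRingType) (n m k : nat) (L : 'M[R]_(n, m)) (Rr : 'M[R]_(k, m)).
Lemma Mll a x : Mmat L Rr (lshift k a) (lshift k x) = L a x.
Proof. by rewrite /Mmat block_mxEul. Qed.
Lemma Mlr a t : Mmat L Rr (lshift k a) (rshift m t) = 0.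
Proof. by rewrite /Mmat block_mxEur mxE. Qed.
Lemma Mrl t x : Mmat L Rr (rshift n t) (lshift k x) = Rr t x - ((t : nat) == x)%:R.
Proof. by rewrite /Mmat block_mxEdl !mxE. Qed.
Lemma Mrr t t' : Mmat L Rr (rshift n t) (rshift m t') = (t == t')%:R.
Proof. by rewrite /Mmat block_mxEdr !mxE. Qed.
End ME.

Lemma init_l n k (a : 'I_n) : init_row (lshift k a) = lshift k.+1 a.
Proof. exact: val_inj. Qed.
Lemma init_r n k (t : 'I_k) : init_row (rshift n t) = rshift n (widen_ord (leqnSn k) t).
Proof. exact: val_inj. Qed.
Lemma main_gen (R : comUnitRingType) (n m k' : nat)
    (L : 'M[R]_(n, m))
    (hk : (k'.+1 <= m)%N) (Rr : 'M[R]_(k'.+1, m))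
    (hred : forall t : 'I_k'.+1, Rr t (widen_ord hk t) = 0) :
  let vk : 'I_m := Ordinal hk in
  let M := Mmat L Rr in
  let c1 : 'I_(m + k'.+1) := lshift k'.+1 vk in
  let rk := row ord_max Rr in
  let M' := Mmat (lamS L rk vk)
              (\matrix_(t < k', i < m)
                 rowS (row (widen_ord (leqnSn k') t) Rr) rk vk 0 i) in
  (exists g, proj_witness M c1 g) /\
  (forall g, proj_witness M c1 g ->
     exists h : 'M[R]_(n + k'),
       h \in unitmx /\
       h *m colsub (colmap vk) (drop_last_row (g *m M)) = M').
Proof.
move=> vk M c1 rk M'.
set lst := last_row n k'.
have lstE : lst = rshift n ord_max by apply/val_inj.
set v := col c1 M.
have vl : v lst 0 = -1.
  rewrite /v /c1 lstE /M /Mmat [X in X = _]mxE block_mxEdl !mxE.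
  have -> : vk = widen_ord hk ord_max by apply/val_inj.
  by rewrite hred /= eqxx sub0r.
have vE : col c1 M = v by [].
have vi : forall i, v i 0 = M i c1 by move=> i; rewrite /v mxE.
clearbody v.
set u := v - delta_mx lst 0.
set g0 := 1%:M + u *m delta_mx 0 lst.
have rowu : delta_mx 0 lst *m u = (-2)%:M :> 'M[R]_1.
  rewrite -rowE; apply/matrixP => i j; rewrite !ord1 !mxE vl eqxx /=.
  by rewrite mulr1n; ring.
have g0v : g0 *m v = delta_mx lst 0.
  rewrite /g0 mulmxDl mul1mx -mulmxA -rowE.
  have -> : row lst v = (-1)%:M.
    by apply/matrixP => i j; rewrite !ord1 !mxE vl eqxx mulr1n.
  rewrite mul_mx_scalar /u scaleN1r opprB addrC subrK.
  by [].
have g0g0 : g0 *m g0 = 1%:M.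
  rewrite /g0 mulmxDr mulmx1 mulmxDl mul1mx -!mulmxA (mulmxA _ u) rowu.
  rewrite mul_scalar_mx -scalemxAr; move: (u *m _) => P.
  apply/matrixP => i j; rewrite !mxE; ring.
have g0U : g0 \in unitmx by case: (mulmx1_unit g0g0).
split; first by exists g0; split; rewrite // vE.
move=> g [gU gv]; rewrite vE -/lst in gv.
set X := g0 *m invmx g.
set Y := g *m invmx g0.
have Xe : X *m delta_mx lst 0 = delta_mx lst 0 :> 'cV_(n + k'.+1).
  by rewrite /X -gv mulmxA mulmxKV // g0v.
have Ye : Y *m delta_mx lst 0 = delta_mx lst 0 :> 'cV_(n + k'.+1).
  by rewrite /Y -g0v mulmxA mulmxKV // gv.
have X0 : forall i, X (init_row i) lst = 0.
  move=> i; have /matrixP/(_ (init_row i) 0) := Xe.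
  by rewrite -colE !mxE init_last.
have XY : X *m Y = 1%:M.
  by rewrite /X /Y mulmxA mulmxKV // mulmxV.
have hU : topl X \in unitmx.
  have : topl X *m topl Y = 1%:M by rewrite -topl_mul // XY topl1.
  by case/mulmx1_unit.
exists (topl X); split => //.
rewrite mulmx_colsub -drop_mul // mulmxA /X mulmxKV //.
apply/matrixP => i j.
have ui : u (init_row i) 0 = v (init_row i) 0.
  by rewrite /u [LHS]mxE [X in _ + X = _]mxE mxE init_last oppr0 addr0.
rewrite mxE mxE /g0 mul_e_entry ui vi lstE /M' /M /c1.
rewrite -(splitK i) -(splitK j); case: (split i) => [a|t] /=;
  rewrite ?init_l ?init_r;
  case: (split j) => [x|t'] /=; rewrite /colmap ?split_l ?split_r.
- case: eqP => [->|/eqP xv].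
    by rewrite !Mll Mlr Mrr eqxx add0r mulr1 !mxE eqxx.
  rewrite !Mll Mrl !mxE (negbTE xv).
  have -> : ((@ord_max k' : nat) == x) = false.
    by apply/negbTE; apply: contra xv => /eqP h; rewrite -val_eqE /= -h.
  rewrite subr0; ring.
- rewrite !Mlr Mrr.
  have -> : (ord_max == widen_ord (leqnSn k') t') = false.
    by rewrite -val_eqE /= eq_sym; apply/negbTE; rewrite neq_ltn; apply/orP; left; exact: ltn_ord.
  by rewrite mulr0 addr0.
- case: eqP => [->|/eqP xv].
    rewrite !Mrl !Mrr eqxx mulr1 !mxE eqxx /=.
    have -> : (widen_ord (leqnSn k') t == ord_max) = false.
      rewrite -val_eqE /=; apply/negbTE; rewrite neq_ltn; apply/orP; left; exact: ltn_ord.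
    by rewrite add0r.
  rewrite !Mrl !mxE (negbTE xv).
  have -> : ((@ord_max k' : nat) == x) = false.
    by apply/negbTE; apply: contra xv => /eqP h; rewrite -val_eqE /= -h.
  rewrite subr0 /=.
  have -> : ((t : nat) == vk) = false.
    by apply/negbTE/eqP => h; have := ltn_ord t; rewrite /= h ltnn.
  rewrite subr0; ring.
- rewrite !Mrr !Mrl.
  have -> : (ord_max == widen_ord (leqnSn k') t') = false.
    by rewrite -val_eqE /= eq_sym; apply/negbTE; rewrite neq_ltn; apply/orP; left; exact: ltn_ord.
  have -> : (widen_ord (leqnSn k') t == widen_ord (leqnSn k') t') = (t == t').
    by rewrite -!val_eqE.
  by rewrite mulr0 addr0.
Qed.
Unset Implicit Arguments.
Theorem mainTheorem9 (c : coeff) (n m k' : nat)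
    (K : {set {set 'I_m}}) (L : 'M[R_of c]_(n, m))
    (hK : facets_of_dim n K) (hL : char_map K L)
    (hk : (k'.+1 <= m)%N) (Rr : 'M[R_of c]_(k'.+1, m))
    (hred : forall t : 'I_k'.+1, Rr t (widen_ord hk t) = 0) :
  let vk : 'I_m := Ordinal hk in
  let M := Mmat L Rr in
  let c1 : 'I_(m + k'.+1) := lshift k'.+1 vk in
  let rk := row ord_max Rr in
  let M' := Mmat (lamS L rk vk)
              (\matrix_(t < k', i < m)
                 rowS (row (widen_ord (leqnSn k') t) Rr) rk vk 0 i) in
  (exists g, proj_witness M c1 g) /\
  (forall g, proj_witness M c1 g ->
     exists h : 'M[R_of c]_(n + k'),
       h \in unitmx /\
       h *m colsub (colmap vk) (drop_last_row (g *m M)) = M').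
Proof. exact: main_gen. Qed.
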